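(* There is a homotopy equivalence $$SU(2)\times SU(2)\setminus Hom(\mathbb Z\oplus\mathbb Z,SU(2))\ \simeq\ SO(3).$$
   Context: $Hom(\mathbb Z\oplus\mathbb Z,SU(2))$ is identified with the subspace of $SU(2)\times SU(2)$ consisting of ordered pairs of commuting elements; the left side is its complement in $SU(2)\times SU(2)$. *)

(* Defs.v *)
From HB Require Import structures.
From mathcomp Require Import all_boot all_order all_algebra.
From mathcomp Require Import all_classical all_reals all_analysis.
From mathcomp Require Import complex.
Import Order.TTheory GRing.Theory Num.Theory.
Import numFieldNormedType.Exports.


Unset Strict Implicit.
Unset Printing Implicit Defensive.

Local Open Scope ring_scope.
Local Open Scope classical_set_scope.

(* The complex numbers R[i] over a real field R : realType carry the metric
   topology of their norm |a + ib| = sqrt(a^2 + b^2) (the usual topology of C).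
   Matrices over R[i] then get the usual (entrywise / sup-norm) topology. *)
HB.instance Definition _ (R : realType) := PseudoPointedMetric.copy R[i] (R[i])^o.

Definition SU2 (R : realType) : set 'M[R[i]]_2 :=
  [set U | (map_mx Num.conj U)^T *m U = 1%:M /\ \det U = 1].

Definition SO3 (R : realType) : set 'M[R]_3 :=
  [set M | M^T *m M = 1%:M /\ \det M = 1].

(* Hom(Z + Z, SU(2)) identified with the pairs of commuting elements of SU(2)^2 *)
Definition HomZ2SU2 (R : realType) : set ('M[R[i]]_2 * 'M[R[i]]_2) :=
  [set p | @SU2 R p.1 /\ @SU2 R p.2 /\ p.1 *m p.2 = p.2 *m p.1].

Definition SU2xSU2 (R : realType) : set ('M[R[i]]_2 * 'M[R[i]]_2) :=
  [set p | @SU2 R p.1 /\ @SU2 R p.2].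

Definition homotopic_on (R : realType) {X Y : topologicalType}
    (A : set X) (B : set Y) (f g : X -> Y) : Prop :=
  exists H : R * X -> Y,
    [/\ {within `[0, 1] `*` A, continuous H},
        (forall t x, `[0, 1] t -> A x -> B (H (t, x))),
        (forall x, A x -> H (0, x) = f x) &
        (forall x, A x -> H (1, x) = g x)].

Definition homotopy_equivalent (R : realType) {X Y : topologicalType}
    (A : set X) (B : set Y) : Prop :=
  exists (f : X -> Y) (g : Y -> X),
    [/\ {within A, continuous f}, f @` A `<=` B,
        {within B, continuous g}, g @` B `<=` A &
        homotopic_on R A A (g \o f) id /\ homotopic_on R B B (f \o g) id].

(* Main.v *)
Require Import Defs.
From HB Require Import structures.
From mathcomp Require Import all_boot all_order all_algebra.
From mathcomp Require Import all_classical all_reals all_analysis.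
From mathcomp Require Import complex.
From mathcomp Require Import ring lra.
Import Order.TTheory GRing.Theory Num.Theory.
Import numFieldNormedType.Exports.
Local Open Scope ring_scope.
Local Open Scope classical_set_scope.

(* Proof sketch: SU(2) = unit quaternions; a pair
   (U, V) fails to commute iff the imaginary parts A, B are linearly
   independent.  F sends (U, V) to the Gram-Schmidt-type frame
   (A/|A|, C x A/..., C/|C|) with C = A x B, G sends an SO(3) frame to the
   pair of pure quaternions given by its first two columns; F o G = id and
   G o F is homotopic to id by a normalised straight-line homotopy. *)

Set Implicit Arguments.
Unset Strict Implicit.

Section S.
Variable R : realType.

Local Notation C := (R[i]).
Lemma conjE (a b : R) : Num.conj (a +i* b)%C = (a -i* b)%C.
Proof.
have -> : (a +i* b)%C = a%:C%C + 'i * b%:C%C by apply/eqP; rewrite eq_complex /= ; simpc.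
rewrite conjC_rect ?inE ?complex_real //.
by apply/eqP; rewrite eq_complex /=; simpc.
Qed.

Lemma det22 (U : 'M[C]_2) : \det U = U 0 0 * U 1 1 - U 0 1 * U 1 0.
Proof.
rewrite (expand_det_row _ ord0) !big_ord_recl big_ord0 /cofactor !det_mx11 !mxE /=.
rewrite expr0 expr1 mul1r mulN1r. 
rewrite addr0 mulrN; congr (_ * U _ _ - U _ _ * U _ _); exact: val_inj.
Qed.

Lemma ord2 (i : 'I_2) : i = 0 \/ i = 1.
Proof. by case: i => [[|[|//]] ?]; [left|right]; apply: val_inj. Qed.

Definition qm (x0 x1 x2 x3 : R) : 'M[C]_2 :=
  \matrix_(i < 2, j < 2)
    if val i == 0%N then (if val j == 0%N then (x0 +i* x1)%C else (x2 +i* x3)%C)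
    else (if val j == 0%N then ((- x2) +i* x3)%C else (x0 +i* (- x1))%C).

Definition r0 (U : 'M[C]_2) := complex.Re (U 0 0).
Definition r1 (U : 'M[C]_2) := complex.Im (U 0 0).
Definition r2 (U : 'M[C]_2) := complex.Re (U 0 1).
Definition r3 (U : 'M[C]_2) := complex.Im (U 0 1).

Lemma SU2_qm (U : 'M[C]_2) : SU2 R U ->
  U = qm (r0 U) (r1 U) (r2 U) (r3 U) /\
  r0 U ^+ 2 + r1 U ^+ 2 + r2 U ^+ 2 + r3 U ^+ 2 = 1.
Proof.
case=> H D; rewrite det22 in D.
have E i j : \sum_(k < 2) Num.conj (U k i) * U k j = (1%:M : 'M[C]_2) i j.
  by rewrite -H !mxE; apply: eq_bigr => k _; rewrite !mxE.
have e1 := E 0 0; have e2 := E 0 1; have e3 := E 1 0; have e4 := E 1 1.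
have L : lift ord0 ord0 = 1 :> 'I_2 by apply: val_inj.
rewrite !big_ord_recl !big_ord0 !mxE /= L !addr0 in e1 e2 e3 e4.
set a := U 0 0 in e1 e2 e3 e4 D *; set b := U 0 1 in e1 e2 e3 e4 D *.
set c := U 1 0 in e1 e2 e3 e4 D *; set d := U 1 1 in e1 e2 e3 e4 D *.
have hd : d = Num.conj a.
  apply/eqP; rewrite -subr_eq0; apply/eqP.
  have -> : d - Num.conj a = - (d * (Num.conj a * a + Num.conj c * c - 1)
     - Num.conj a * (a * d - b * c - 1) - c * (Num.conj a * b + Num.conj c * d)) by ring.
  by rewrite e1 D e2; ring.
have hc : c = - Num.conj b.
  apply/eqP; rewrite -subr_eq0 opprK; apply/eqP.
  have -> : c + Num.conj b = - Num.conj b * (a * d - b * c - 1)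
     - c * (Num.conj b * b + Num.conj d * d - 1) + d * (Num.conj b * a + Num.conj d * c) by ring.
  by rewrite e4 D e3; ring.
rewrite hd hc in D.
have Ua : U 0 0 = a by []. have Ub : U 0 1 = b by [].
have Uc : U 1 0 = c by []. have Ud : U 1 1 = d by [].
rewrite /r0 /r1 /r2 /r3 Ua Ub.
move: a b c d Ua Ub Uc Ud hd hc D {e1 e2 e3 e4} => [x0 x1] [x2 x3] c d Ua Ub Uc Ud hd hc D /=.
split.
  apply/matrixP => i j; rewrite !mxE.
  case: (ord2 i) => ->; case: (ord2 j) => -> /=.
  - by rewrite Ua.
  - by rewrite Ub.
  - by rewrite Uc hc conjE; apply/eqP; rewrite eq_complex /=; simpc.
  - by rewrite Ud hd conjE.
move: D; rewrite !conjE; simpc => /eqP; rewrite eq_complex /= => /andP [/eqP <- _].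
by rewrite !expr2; ring.
Qed.

Definition qmul0 (x0 x1 x2 x3 y0 y1 y2 y3 : R) := x0*y0 - x1*y1 - x2*y2 - x3*y3.
Definition qmul1 (x0 x1 x2 x3 y0 y1 y2 y3 : R) := x0*y1 + x1*y0 + (x2*y3 - x3*y2).
Definition qmul2 (x0 x1 x2 x3 y0 y1 y2 y3 : R) := x0*y2 + x2*y0 + (x3*y1 - x1*y3).
Definition qmul3 (x0 x1 x2 x3 y0 y1 y2 y3 : R) := x0*y3 + x3*y0 + (x1*y2 - x2*y1).

Lemma qm_mul x0 x1 x2 x3 y0 y1 y2 y3 :
  qm x0 x1 x2 x3 *m qm y0 y1 y2 y3 =
  qm (qmul0 x0 x1 x2 x3 y0 y1 y2 y3) (qmul1 x0 x1 x2 x3 y0 y1 y2 y3)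
     (qmul2 x0 x1 x2 x3 y0 y1 y2 y3) (qmul3 x0 x1 x2 x3 y0 y1 y2 y3).
Proof.
rewrite /qmul0 /qmul1 /qmul2 /qmul3.
apply/matrixP => i j; rewrite !mxE !big_ord_recl !big_ord0 !mxE.
by case: (ord2 i) => ->; case: (ord2 j) => -> /=; apply/eqP; rewrite eq_complex /=;
  apply/andP; split; apply/eqP; ring.
Qed.

Lemma qm_inj x0 x1 x2 x3 y0 y1 y2 y3 :
  qm x0 x1 x2 x3 = qm y0 y1 y2 y3 -> [/\ x0 = y0, x1 = y1, x2 = y2 & x3 = y3].
Proof.
move=> E; have E0 := congr1 (fun M : 'M[C]_2 => M 0 0) E; have E1 := congr1 (fun M : 'M[C]_2 => M 0 1) E.
rewrite /= !mxE /= in E0 E1.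
by case: E0 => -> ->; case: E1 => -> ->.
Qed.

Lemma qm_adj x0 x1 x2 x3 :
  (map_mx Num.conj (qm x0 x1 x2 x3))^T = qm x0 (- x1) (- x2) (- x3).
Proof.
apply/matrixP => i j; rewrite !mxE.
by case: (ord2 i) => ->; case: (ord2 j) => -> /=; rewrite conjE //; apply/eqP;
  rewrite eq_complex /=; apply/andP; split; apply/eqP; ring.
Qed.

Lemma qm1 : qm 1 0 0 0 = 1%:M.
Proof.
apply/matrixP => i j; rewrite !mxE.
case: (ord2 i) => ->; case: (ord2 j) => -> /=; rewrite ?oppr0 ?complexr0 ?rmorph1 ?rmorph0 //.
Qed.

Lemma qm_SU2 x0 x1 x2 x3 : x0 ^+ 2 + x1 ^+ 2 + x2 ^+ 2 + x3 ^+ 2 = 1 ->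
  SU2 R (qm x0 x1 x2 x3).
Proof.
move=> n1; split.
  rewrite qm_adj qm_mul -qm1 /qmul0 /qmul1 /qmul2 /qmul3.
  by congr qm; [rewrite -n1; ring | ring | ring | ring].
rewrite det22 !mxE /=; apply/eqP; rewrite eq_complex /=; apply/andP; split; apply/eqP.
  by rewrite -n1; ring.
ring.
Qed.

Lemma qm_comm x0 x1 x2 x3 y0 y1 y2 y3 :
  qm x0 x1 x2 x3 *m qm y0 y1 y2 y3 = qm y0 y1 y2 y3 *m qm x0 x1 x2 x3 <->
  [/\ x2*y3 - x3*y2 = 0, x3*y1 - x1*y3 = 0 & x1*y2 - x2*y1 = 0].
Proof.
rewrite !qm_mul /qmul0 /qmul1 /qmul2 /qmul3; split.
  move=> /qm_inj [_ e1 e2 e3]; split.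
  - have : 2 * (x2*y3 - x3*y2) = 0 by rewrite -[LHS]subr0 -(subrr (y0*x1 + y1*x0 + (y2*x3 - y3*x2))) -{1}e1; ring.
    by move/eqP; rewrite mulf_eq0 pnatr_eq0 orFb => /eqP.
  - have : 2 * (x3*y1 - x1*y3) = 0 by rewrite -[LHS]subr0 -(subrr (y0*x2 + y2*x0 + (y3*x1 - y1*x3))) -{1}e2; ring.
    by move/eqP; rewrite mulf_eq0 pnatr_eq0 orFb => /eqP.
  - have : 2 * (x1*y2 - x2*y1) = 0 by rewrite -[LHS]subr0 -(subrr (y0*x3 + y3*x0 + (y1*x2 - y2*x1))) -{1}e3; ring.
    by move/eqP; rewrite mulf_eq0 pnatr_eq0 orFb => /eqP.
case=> c1 c2 c3; congr qm.
- ring.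
- by apply/eqP; rewrite -subr_eq0; apply/eqP; transitivity (2 * (x2*y3 - x3*y2)); [ring | rewrite c1 mulr0].
- by apply/eqP; rewrite -subr_eq0; apply/eqP; transitivity (2 * (x3*y1 - x1*y3)); [ring | rewrite c2 mulr0].
- by apply/eqP; rewrite -subr_eq0; apply/eqP; transitivity (2 * (x1*y2 - x2*y1)); [ring | rewrite c3 mulr0].
Qed.


Lemma normC_lt (u : C) (e : R) : `|u| < e%:C%C -> `|complex.Re u| < e /\ `|complex.Im u| < e.
Proof.
case: u => a b /=. rewrite normc_def /= ltcR => H.
split; apply: le_lt_trans H; rewrite -sqrtr_sqr ler_sqrt ?lerDl ?lerDr ?sqr_ge0 //; exact: addr_ge0 (sqr_ge0 _) (sqr_ge0 _).
Qed.
Lemma Re_cont : continuous (@complex.Re R).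
Proof.
move=> z P /= /nbhs_ballP [e e0 sP]; apply/nbhs_ballP; exists e%:C%C; first by rewrite /mkset; have := @ltcR R 0 e; rewrite rmorph0 => ->.
move=> w Bw; apply: sP; move: Bw; rewrite /ball /= => /normC_lt [+ _].
by rewrite raddfB.
Qed.
Lemma Im_cont : continuous (@complex.Im R).
Proof.
move=> z P /= /nbhs_ballP [e e0 sP]; apply/nbhs_ballP; exists e%:C%C; first by rewrite /mkset; have := @ltcR R 0 e; rewrite rmorph0 => ->.
move=> w Bw; apply: sP; move: Bw; rewrite /ball /= => /normC_lt [_].
by rewrite raddfB.
Qed.
Lemma cplx_cont {T : topologicalType} (f g : T -> R) x :
  {for x, continuous f} -> {for x, continuous g} ->
  {for x, continuous (fun y => (f y +i* g y)%C)}.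
Proof.
move=> cf cg P /= /nbhs_ballP [eps eps0 sP].
have : (0 : C) < eps by exact: eps0.
case: eps {eps0} sP => e b sP; rewrite ltcE /= => /andP [/eqP b0 e0].
subst b.
have e2 : 0 < e / 2 by rewrite divr_gt0.
have Hf : nbhs x (f @^-1` ball (f x) (e / 2)) by apply: cf; apply/nbhs_ballP; exists (e/2).
have Hg : nbhs x (g @^-1` ball (g x) (e / 2)) by apply: cg; apply/nbhs_ballP; exists (e/2).
apply: filterS (filterI Hf Hg) => w [/= Bf Bg]; apply: sP.
move: Bf Bg; rewrite /ball /= => Bf Bg.
rewrite normc_def /= complexr0 ltcR.
move: Bf Bg; set a := f x - f w; set b := g x - g w => Bf Bg.
have -> : e = Num.sqrt (e ^+ 2) by rewrite sqrtr_sqr gtr0_norm.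
rewrite ltr_sqrt ?exprn_gt0 //.
move: Bf Bg; rewrite !ltr_norml => /andP [a1 a2] /andP [b1 b2].
nra.
Qed.
Lemma mx_cont {T : topologicalType} {K : topologicalType} m n
  (F : T -> 'M[K]_(m, n)) x :
  (forall i j, {for x, continuous (fun y => F y i j)}) -> {for x, continuous F}.
Proof.
move=> cF A [P PF sPA].
have H : \forall y \near x, forall i j, P i j (F y i j).
  apply: filter_forall => i; apply: filter_forall => j.
  exact: cF i j _ (PF i j).
by apply: filterS H => y Hy; apply: sPA.
Qed.
Lemma entry_cont {K : topologicalType} m n i j :
  continuous (fun M : 'M[K]_(m, n) => M i j).
Proof.
move=> M A MA.
exists (fun i' j' => if (i' == i) && (j' == j) then A else setT).
  by move=> i' j'; case: ifP => [/andP [/eqP -> /eqP ->] //|_]; exact: filterT.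
by move=> N /(_ i j); rewrite !eqxx.
Qed.
Section Comb.
Context {T : topologicalType}.
Implicit Types (f g : T -> R) (x : T).
Lemma cD f g x : {for x, continuous f} -> {for x, continuous g} -> {for x, continuous (fun y => f y + g y)}.
Proof. exact: cvgD. Qed.
Lemma cB f g x : {for x, continuous f} -> {for x, continuous g} -> {for x, continuous (fun y => f y - g y)}.
Proof. exact: cvgB. Qed.
Lemma cM f g x : {for x, continuous f} -> {for x, continuous g} -> {for x, continuous (fun y => f y * g y)}.
Proof. exact: cvgM. Qed.
Lemma cN f x : {for x, continuous f} -> {for x, continuous (fun y => - f y)}.
Proof. exact: cvgN. Qed.
Lemma cX f x : {for x, continuous f} -> {for x, continuous (fun y => f y ^+ 2)}.
Proof. by move=> h; exact: (@continuous_comp _ _ _ f (fun z : R => z ^+ 2) x h (@exprn_continuous R 2 (f x))). Qed.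
Lemma cV f x : f x != 0 -> {for x, continuous f} -> {for x, continuous (fun y => (f y)^-1)}.
Proof. exact: cvgV. Qed.
Lemma cDiv f g x : g x != 0 -> {for x, continuous f} -> {for x, continuous g} -> {for x, continuous (fun y => f y / g y)}.
Proof. by move=> g0 cf cg; apply: cM => //; apply: cV. Qed.
Lemma cC (c : R) x : {for x, continuous (fun _ : T => c)}.
Proof. exact: cvg_cst. Qed.
Lemma cS f x : {for x, continuous f} -> {for x, continuous (fun y => Num.sqrt (f y))}.
Proof. by move=> cf; apply: (continuous_comp cf); exact: sqrt_continuous. Qed.
End Comb.
Lemma cpair {T U V : topologicalType} (f : T -> U) (g : T -> V) x :
  {for x, continuous f} -> {for x, continuous g} -> {for x, continuous (fun y => (f y, g y))}.
Proof. exact: cvg_pair. Qed.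
Lemma cfst {U V : topologicalType} : continuous (@fst U V).
Proof. move=> p; exact: cvg_fst. Qed.
Lemma csnd {U V : topologicalType} : continuous (@snd U V).
Proof. move=> p; exact: cvg_snd. Qed.

Lemma ord3 (i : 'I_3) : [\/ i = 0, i = 1 | i = 2].
Proof. by case: i => [[|[|[|//]]] ?]; [constructor 1|constructor 2|constructor 3]; apply: val_inj. Qed.

Lemma det33 (M : 'M[R]_3) : \det M =
  M 0 0 * (M 1 1 * M 2 2 - M 1 2 * M 2 1)
  - M 0 1 * (M 1 0 * M 2 2 - M 1 2 * M 2 0)
  + M 0 2 * (M 1 0 * M 2 1 - M 1 1 * M 2 0).
Proof.
pose F (a b : nat) := M (inord a) (inord b).
have -> : M = \matrix_(i < 3, j < 3) F i j by apply/matrixP => i j; rewrite mxE /F !inord_val.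
rewrite (expand_det_row _ ord0) !big_ord_recl big_ord0 /cofactor.
rewrite !(expand_det_row _ ord0) !big_ord_recl !big_ord0 /cofactor !det_mx11 !mxE /=.
rewrite /bump /=.
ring.
Qed.
Definition frame (u1 u2 u3 w1 w2 w3 : R) : 'M[R]_3 :=
  \matrix_(i < 3, j < 3) nth 0 (nth [::]
    [:: [:: u1; w2*u3 - w3*u2; w1]; [:: u2; w3*u1 - w1*u3; w2]; [:: u3; w1*u2 - w2*u1; w3]] i) j.

Lemma frame_SO3 u1 u2 u3 w1 w2 w3 :
  u1^+2 + u2^+2 + u3^+2 = 1 -> w1^+2 + w2^+2 + w3^+2 = 1 -> u1*w1 + u2*w2 + u3*w3 = 0 ->
  SO3 R (frame u1 u2 u3 w1 w2 w3).
Proof.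
move=> hu hw huw; split.
  apply/matrixP => i j; rewrite !mxE !big_ord_recl big_ord0 !mxE /=.
  have e22 : forall a b, a = 1 -> b = 1 -> (w2*u3 - w3*u2) * (w2*u3 - w3*u2) + ((w3*u1 - w1*u3) * (w3*u1 - w1*u3) + ((w1*u2 - w2*u1) * (w1*u2 - w2*u1) + 0)) = a * b.
    move=> a b -> ->; transitivity ((u1^+2 + u2^+2 + u3^+2) * (w1^+2 + w2^+2 + w3^+2) - (u1*w1 + u2*w2 + u3*w3)^+2); first ring.
    by rewrite hu hw huw; ring.
  case: (ord3 i) => ->; case: (ord3 j) => -> /=;
   rewrite ?mulr1n ?mulr0n; try (by ring);
   try (by rewrite -hu; ring); try (by rewrite -hw; ring);
   try (by transitivity (u1*w1 + u2*w2 + u3*w3); [ring|]);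
   try (by rewrite (e22 1 1) ?mulr1).
rewrite det33 !mxE /=.
transitivity ((u1^+2 + u2^+2 + u3^+2) * (w1^+2 + w2^+2 + w3^+2) - (u1*w1 + u2*w2 + u3*w3)^+2); first ring.
by rewrite hu hw huw; ring.
Qed.
Lemma sq3_eq0 (a b c : R) : a^+2 + b^+2 + c^+2 = 0 -> [/\ a = 0, b = 0 & c = 0].
Proof.
move=> h.
have ha := sqr_ge0 a; have hb := sqr_ge0 b; have hc := sqr_ge0 c.
have a0 : a^+2 = 0 by lra. have b0 : b^+2 = 0 by lra. have c0 : c^+2 = 0 by lra.
by split; apply/eqP; rewrite -sqrf_eq0; apply/eqP.
Qed.

Lemma SO3_cols (M : 'M[R]_3) : SO3 R M ->
  [/\ M 0 0 ^+2 + M 1 0 ^+2 + M 2 0 ^+2 = 1,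
      M 0 1 ^+2 + M 1 1 ^+2 + M 2 1 ^+2 = 1,
      M 0 0 * M 0 1 + M 1 0 * M 1 1 + M 2 0 * M 2 1 = 0 &
      [/\ M 0 2 = M 1 0 * M 2 1 - M 2 0 * M 1 1,
          M 1 2 = M 2 0 * M 0 1 - M 0 0 * M 2 1 &
          M 2 2 = M 0 0 * M 1 1 - M 1 0 * M 0 1]].
Proof.
case=> O D.
have E i j : \sum_(k < 3) M k i * M k j = (1%:M : 'M[R]_3) i j.
  by rewrite -O !mxE; apply: eq_bigr => k _; rewrite !mxE.
have e00 := E 0 0; have e11 := E 1 1; have e22 := E 2 2; have e01 := E 0 1.
rewrite !big_ord_recl !big_ord0 !mxE /= in e00 e11 e22 e01.
have L1 : lift ord0 ord0 = 1 :> 'I_3 by apply: val_inj.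
have L2 : lift ord0 (lift ord0 ord0) = 2 :> 'I_3 by apply: val_inj.
rewrite ?L1 ?L2 ?mulr1n ?mulr0n ?addr0 in e00 e11 e22 e01.
rewrite det33 in D.
have hu : M 0 0 ^+2 + M 1 0 ^+2 + M 2 0 ^+2 = 1 by rewrite -e00; ring.
have hv : M 0 1 ^+2 + M 1 1 ^+2 + M 2 1 ^+2 = 1 by rewrite -e11; ring.
have huv : M 0 0 * M 0 1 + M 1 0 * M 1 1 + M 2 0 * M 2 1 = 0 by rewrite -e01; ring.
split => //.
have := @sq3_eq0 (M 0 2 - (M 1 0 * M 2 1 - M 2 0 * M 1 1))
                 (M 1 2 - (M 2 0 * M 0 1 - M 0 0 * M 2 1))
                 (M 2 2 - (M 0 0 * M 1 1 - M 1 0 * M 0 1)).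
case.
  transitivity ((M 0 2 * M 0 2 + (M 1 2 * M 1 2 + M 2 2 * M 2 2))
     - 2 * (M 0 0 * (M 1 1 * M 2 2 - M 1 2 * M 2 1) - M 0 1 * (M 1 0 * M 2 2 - M 1 2 * M 2 0) +
            M 0 2 * (M 1 0 * M 2 1 - M 1 1 * M 2 0))
     + ((M 0 0 ^+2 + M 1 0 ^+2 + M 2 0 ^+2) * (M 0 1 ^+2 + M 1 1 ^+2 + M 2 1 ^+2)
        - (M 0 0 * M 0 1 + M 1 0 * M 1 1 + M 2 0 * M 2 1)^+2)); first ring.
  rewrite e22 D hu hv huv; ring.
by move=> /eqP; rewrite subr_eq0 => /eqP -> /eqP; rewrite subr_eq0 => /eqP -> /eqP; rewrite subr_eq0 => /eqP ->.
Qed.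
End S.

Section M.
Variable R : realType.
Local Notation C := (R[i]).
Local Notation X := ('M[C]_2 * 'M[C]_2)%type.

Definition a0 (p : X) := r0 p.1.
Definition a1 (p : X) := r1 p.1.
Definition a2 (p : X) := r2 p.1.
Definition a3 (p : X) := r3 p.1.
Definition b0 (p : X) := r0 p.2.
Definition b1 (p : X) := r1 p.2.
Definition b2 (p : X) := r2 p.2.
Definition b3 (p : X) := r3 p.2.

Lemma ReE_cont i j : continuous (fun p : X => complex.Re (p.1 i j)).
Proof.
move=> p; apply: (@continuous_comp _ _ _ (fun p : X => p.1 i j) (@complex.Re R)); last exact: Re_cont.
exact: (@continuous_comp _ _ _ fst (fun M : 'M[C]_2 => M i j) p (@cfst _ _ p) (@entry_cont _ _ _ i j _)).
Qed.

Lemma ImE_cont i j : continuous (fun p : X => complex.Im (p.1 i j)).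
Proof.
move=> p; apply: (@continuous_comp _ _ _ (fun p : X => p.1 i j) (@complex.Im R)); last exact: Im_cont.
exact: (@continuous_comp _ _ _ fst (fun M : 'M[C]_2 => M i j) p (@cfst _ _ p) (@entry_cont _ _ _ i j _)).
Qed.
Lemma ReE2_cont i j : continuous (fun p : X => complex.Re (p.2 i j)).
Proof.
move=> p; apply: (@continuous_comp _ _ _ (fun p : X => p.2 i j) (@complex.Re R)); last exact: Re_cont.
exact: (@continuous_comp _ _ _ snd (fun M : 'M[C]_2 => M i j) p (@csnd _ _ p) (@entry_cont _ _ _ i j _)).
Qed.
Lemma ImE2_cont i j : continuous (fun p : X => complex.Im (p.2 i j)).
Proof.
move=> p; apply: (@continuous_comp _ _ _ (fun p : X => p.2 i j) (@complex.Im R)); last exact: Im_cont.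
exact: (@continuous_comp _ _ _ snd (fun M : 'M[C]_2 => M i j) p (@csnd _ _ p) (@entry_cont _ _ _ i j _)).
Qed.
Lemma a0c p : {for p, continuous a0}. Proof. exact: ReE_cont. Qed.
Lemma a1c p : {for p, continuous a1}. Proof. exact: ImE_cont. Qed.
Lemma a2c p : {for p, continuous a2}. Proof. exact: ReE_cont. Qed.
Lemma a3c p : {for p, continuous a3}. Proof. exact: ImE_cont. Qed.
Lemma b0c p : {for p, continuous b0}. Proof. exact: ReE2_cont. Qed.
Lemma b1c p : {for p, continuous b1}. Proof. exact: ImE2_cont. Qed.
Lemma b2c p : {for p, continuous b2}. Proof. exact: ReE2_cont. Qed.
Lemma b3c p : {for p, continuous b3}. Proof. exact: ImE2_cont. Qed.

Definition c1 p := a2 p * b3 p - a3 p * b2 p.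
Definition c2 p := a3 p * b1 p - a1 p * b3 p.
Definition c3 p := a1 p * b2 p - a2 p * b1 p.
Definition nA p := Num.sqrt (a1 p ^+ 2 + a2 p ^+ 2 + a3 p ^+ 2).
Definition nC p := Num.sqrt (c1 p ^+ 2 + c2 p ^+ 2 + c3 p ^+ 2).
Definition u1 p := a1 p / nA p.
Definition u2 p := a2 p / nA p.
Definition u3 p := a3 p / nA p.
Definition w1 p := c1 p / nC p.
Definition w2 p := c2 p / nC p.
Definition w3 p := c3 p / nC p.
Definition v1 p := w2 p * u3 p - w3 p * u2 p.
Definition v2 p := w3 p * u1 p - w1 p * u3 p.
Definition v3 p := w1 p * u2 p - w2 p * u1 p.

Ltac cont1 := match goal with
  | |- {for _, continuous (fun _ => _ + _)} => apply: cD
  | |- {for _, continuous (fun _ => _ - _)} => apply: cB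
  | |- {for _, continuous (fun _ => _ * _)} => apply: cM
  | |- {for _, continuous (fun _ => - _)} => apply: cN
  | |- {for _, continuous (fun _ => _ ^+ 2)} => apply: cX
  | |- {for _, continuous (fun _ => Num.sqrt _)} => apply: cS
  | |- {for _, continuous (fun _ => a0 _)} => apply: a0c
  | |- {for _, continuous (fun _ => a1 _)} => apply: a1c
  | |- {for _, continuous (fun _ => a2 _)} => apply: a2c
  | |- {for _, continuous (fun _ => a3 _)} => apply: a3c
  | |- {for _, continuous (fun _ => b0 _)} => apply: b0c
  | |- {for _, continuous (fun _ => b1 _)} => apply: b1c
  | |- {for _, continuous (fun _ => b2 _)} => apply: b2c
  | |- {for _, continuous (fun _ => b3 _)} => apply: b3c
  | |- {for _, continuous a0} => apply: a0c
  | |- {for _, continuous a1} => apply: a1c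
  | |- {for _, continuous a2} => apply: a2c
  | |- {for _, continuous a3} => apply: a3c
  | |- {for _, continuous b0} => apply: b0c
  | |- {for _, continuous b1} => apply: b1c
  | |- {for _, continuous b2} => apply: b2c
  | |- {for _, continuous b3} => apply: b3c
  | |- {for _, continuous (fun _ => _)} => apply: cC
  end.
Ltac cont := repeat cont1.

Lemma c1c p : {for p, continuous c1}. Proof. rewrite /c1; cont. Qed.
Lemma c2c p : {for p, continuous c2}. Proof. rewrite /c2; cont. Qed.
Lemma c3c p : {for p, continuous c3}. Proof. rewrite /c3; cont. Qed.
Lemma nAc p : {for p, continuous nA}. Proof. rewrite /nA; cont. Qed.
Lemma nCc p : {for p, continuous nC}. Proof. rewrite /nC; cont; [exact: c1c|exact: c2c|exact: c3c]. Qed.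

Lemma cont_ext {T U : topologicalType} (f g : T -> U) x :
  (forall y, f y = g y) -> {for x, continuous g} -> {for x, continuous f}.
Proof. by move=> e; rewrite (funext e). Qed.

Lemma u1c p : nA p != 0 -> {for p, continuous u1}.
Proof. by move=> h; apply: cDiv => //; [exact: a1c | exact: nAc]. Qed.
Lemma u2c p : nA p != 0 -> {for p, continuous u2}.
Proof. by move=> h; apply: cDiv => //; [exact: a2c | exact: nAc]. Qed.
Lemma u3c p : nA p != 0 -> {for p, continuous u3}.
Proof. by move=> h; apply: cDiv => //; [exact: a3c | exact: nAc]. Qed.
Lemma w1c p : nC p != 0 -> {for p, continuous w1}.
Proof. by move=> h; apply: cDiv => //; [exact: c1c | exact: nCc]. Qed.
Lemma w2c p : nC p != 0 -> {for p, continuous w2}.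
Proof. by move=> h; apply: cDiv => //; [exact: c2c | exact: nCc]. Qed.
Lemma w3c p : nC p != 0 -> {for p, continuous w3}.
Proof. by move=> h; apply: cDiv => //; [exact: c3c | exact: nCc]. Qed.
Lemma v1c p : nA p != 0 -> nC p != 0 -> {for p, continuous v1}.
Proof. by move=> h h'; apply: cB; apply: cM; [exact: w2c|exact: u3c|exact: w3c|exact: u2c]. Qed.
Lemma v2c p : nA p != 0 -> nC p != 0 -> {for p, continuous v2}.
Proof. by move=> h h'; apply: cB; apply: cM; [exact: w3c|exact: u1c|exact: w1c|exact: u3c]. Qed.
Lemma v3c p : nA p != 0 -> nC p != 0 -> {for p, continuous v3}.
Proof. by move=> h h'; apply: cB; apply: cM; [exact: w1c|exact: u2c|exact: w2c|exact: u1c]. Qed.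

Definition F (p : X) : 'M[R]_3 := frame (u1 p) (u2 p) (u3 p) (w1 p) (w2 p) (w3 p).

Lemma Fc p : nA p != 0 -> nC p != 0 -> {for p, continuous F}.
Proof.
move=> h h'; apply: mx_cont => i j.
case: (ord3 i) => ->; case: (ord3 j) => ->.
- by apply: (cont_ext (g := u1)) => [y|]; [rewrite /F mxE | exact: u1c].
- by apply: (cont_ext (g := v1)) => [y|]; [rewrite /F mxE | exact: v1c].
- by apply: (cont_ext (g := w1)) => [y|]; [rewrite /F mxE | exact: w1c].
- by apply: (cont_ext (g := u2)) => [y|]; [rewrite /F mxE | exact: u2c].
- by apply: (cont_ext (g := v2)) => [y|]; [rewrite /F mxE | exact: v2c].
- by apply: (cont_ext (g := w2)) => [y|]; [rewrite /F mxE | exact: w2c].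
- by apply: (cont_ext (g := u3)) => [y|]; [rewrite /F mxE | exact: u3c].
- by apply: (cont_ext (g := v3)) => [y|]; [rewrite /F mxE | exact: v3c].
- by apply: (cont_ext (g := w3)) => [y|]; [rewrite /F mxE | exact: w3c].
Qed.

Definition D := SU2xSU2 R `\` HomZ2SU2 R.

Lemma Dfacts p : D p ->
  [/\ p.1 = qm (a0 p) (a1 p) (a2 p) (a3 p), p.2 = qm (b0 p) (b1 p) (b2 p) (b3 p),
      a0 p ^+ 2 + a1 p ^+ 2 + a2 p ^+ 2 + a3 p ^+ 2 = 1,
      b0 p ^+ 2 + b1 p ^+ 2 + b2 p ^+ 2 + b3 p ^+ 2 = 1 &
      0 < c1 p ^+ 2 + c2 p ^+ 2 + c3 p ^+ 2].
Proof.
case=> [[s1 s2] nH].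
have [e1 n1] := SU2_qm s1; have [e2 n2] := SU2_qm s2.
split => //.
rewrite lt_neqAle !addr_ge0 ?sqr_ge0 // andbT; apply/negP => /eqP /esym /sq3_eq0 [h1 h2 h3].
apply: nH; split => //; split => //.
rewrite e1 e2; apply/qm_comm; split.
- exact: h1.
- exact: h2.
- exact: h3.
Qed.

Lemma DnA p : D p -> 0 < a1 p ^+ 2 + a2 p ^+ 2 + a3 p ^+ 2.
Proof.
move=> /Dfacts [_ _ _ _ hc].
rewrite lt_neqAle !addr_ge0 ?sqr_ge0 // andbT; apply/negP => /eqP /esym /sq3_eq0 [h1 h2 h3].
by move: hc; rewrite /c1 /c2 /c3 h1 h2 h3 !(mulr0, mul0r, subrr) expr2 !mulr0 !addr0 ltxx.
Qed.

Lemma nA_gt0 p : D p -> 0 < nA p.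
Proof. by move=> /DnA h; rewrite /nA sqrtr_gt0. Qed.
Lemma nC_gt0 p : D p -> 0 < nC p.
Proof. by move=> /Dfacts [_ _ _ _ h]; rewrite /nC sqrtr_gt0. Qed.

Lemma unit3 (x1 x2 x3 : R) : 0 < x1^+2 + x2^+2 + x3^+2 ->
  let n := Num.sqrt (x1^+2 + x2^+2 + x3^+2) in (x1/n)^+2 + (x2/n)^+2 + (x3/n)^+2 = 1.
Proof.
move=> h n.
have n2 : n ^+ 2 = x1^+2 + x2^+2 + x3^+2 by rewrite /n sqr_sqrtr // ltW.
have n0 : n != 0 by rewrite /n gt_eqF // sqrtr_gt0.
rewrite !expr_div_n -!mulrDl n2 divff //; exact: lt0r_neq0.
Qed.

Lemma unit4 (x0 x1 x2 x3 : R) : 0 < x0^+2 + x1^+2 + x2^+2 + x3^+2 ->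
  let n := Num.sqrt (x0^+2 + x1^+2 + x2^+2 + x3^+2) in (x0/n)^+2 + (x1/n)^+2 + (x2/n)^+2 + (x3/n)^+2 = 1.
Proof.
move=> h n.
have n2 : n ^+ 2 = x0^+2 + x1^+2 + x2^+2 + x3^+2 by rewrite /n sqr_sqrtr // ltW.
rewrite !expr_div_n -!mulrDl n2 divff //; exact: lt0r_neq0.
Qed.

Lemma uu p : D p -> u1 p ^+ 2 + u2 p ^+ 2 + u3 p ^+ 2 = 1.
Proof. by move=> /DnA h; have := unit3 h. Qed.
Lemma ww p : D p -> w1 p ^+ 2 + w2 p ^+ 2 + w3 p ^+ 2 = 1.
Proof. by move=> /Dfacts [_ _ _ _ h]; have := unit3 h. Qed.
Lemma uw p : D p -> u1 p * w1 p + u2 p * w2 p + u3 p * w3 p = 0.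
Proof.
move=> Dp; have A0 := nA_gt0 Dp; have C0 := nC_gt0 Dp.
rewrite /u1 /u2 /u3 /w1 /w2 /w3 /c1 /c2 /c3.
field; rewrite ?gt_eqF //.
Qed.
Lemma vv p : D p -> v1 p ^+ 2 + v2 p ^+ 2 + v3 p ^+ 2 = 1.
Proof.
move=> Dp.
transitivity ((u1 p^+2 + u2 p^+2 + u3 p^+2) * (w1 p^+2 + w2 p^+2 + w3 p^+2) - (u1 p * w1 p + u2 p * w2 p + u3 p * w3 p)^+2).
  by rewrite /v1 /v2 /v3; ring.
by rewrite uu // ww // uw //; ring.
Qed.

Lemma F_SO3 p : D p -> SO3 R (F p).
Proof. by move=> Dp; apply: frame_SO3; [exact: uu | exact: ww | exact: uw]. Qed.
End M.

Section N.
Variable R : realType.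
Local Notation C := (R[i]).
Local Notation X := ('M[C]_2 * 'M[C]_2)%type.

Definition G (M : 'M[R]_3) : X :=
  (qm 0 (M 0 0) (M 1 0) (M 2 0), qm 0 (M 0 1) (M 1 1) (M 2 1)).

Lemma G_D M : SO3 R M -> D (G M).
Proof.
move=> /SO3_cols [hu hv huv _].
split.
  by split; apply: qm_SU2; rewrite expr0n /= add0r ?hu ?hv.
case=> _ [_ /qm_comm [h1 h2 h3]].
have : (M 0 0 ^+2 + M 1 0 ^+2 + M 2 0 ^+2) * (M 0 1 ^+2 + M 1 1 ^+2 + M 2 1 ^+2)
   - (M 0 0 * M 0 1 + M 1 0 * M 1 1 + M 2 0 * M 2 1)^+2 = 0.
  transitivity ((M 1 0 * M 2 1 - M 2 0 * M 1 1)^+2 + (M 2 0 * M 0 1 - M 0 0 * M 2 1)^+2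
     + (M 0 0 * M 1 1 - M 1 0 * M 0 1)^+2); first ring.
  by rewrite h1 h2 h3; ring.
by rewrite hu hv huv expr0n /= subr0 mulr1 => /eqP; rewrite oner_eq0.
Qed.

Lemma FG M : SO3 R M -> F (G M) = M.
Proof.
move=> /SO3_cols [hu hv huv [w1e w2e w3e]].
have nA1 : nA (G M) = 1.
  by rewrite /nA /a1 /a2 /a3 /r1 /r2 /r3 /= !mxE /= hu sqrtr1.
have nC1 : nC (G M) = 1.
  rewrite /nC /c1 /c2 /c3 /a1 /a2 /a3 /b1 /b2 /b3 /r1 /r2 /r3 /= !mxE /=.
  have -> : (M 1 0 * M 2 1 - M 2 0 * M 1 1)^+2 + (M 2 0 * M 0 1 - M 0 0 * M 2 1)^+2
     + (M 0 0 * M 1 1 - M 1 0 * M 0 1)^+2 =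
     (M 0 0 ^+2 + M 1 0 ^+2 + M 2 0 ^+2) * (M 0 1 ^+2 + M 1 1 ^+2 + M 2 1 ^+2)
   - (M 0 0 * M 0 1 + M 1 0 * M 1 1 + M 2 0 * M 2 1)^+2 by ring.
  by rewrite hu hv huv expr0n /= subr0 mulr1 sqrtr1.
apply/matrixP => i j; rewrite /F /frame mxE.
rewrite /u1 /u2 /u3 /w1 /w2 /w3 nA1 nC1 !divr1.
rewrite /c1 /c2 /c3 /a1 /a2 /a3 /b1 /b2 /b3 /r1 /r2 /r3 /= !mxE /=.
case: (ord3 i) => ->; case: (ord3 j) => -> /=; rewrite ?w1e ?w2e ?w3e //.
- transitivity (M 0 1 * (M 0 0 ^+2 + M 1 0 ^+2 + M 2 0 ^+2) - M 0 0 * (M 0 0 * M 0 1 + M 1 0 * M 1 1 + M 2 0 * M 2 1)); first ring.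
  by rewrite hu huv; ring.
- transitivity (M 1 1 * (M 0 0 ^+2 + M 1 0 ^+2 + M 2 0 ^+2) - M 1 0 * (M 0 0 * M 0 1 + M 1 0 * M 1 1 + M 2 0 * M 2 1)); first ring.
  by rewrite hu huv; ring.
- transitivity (M 2 1 * (M 0 0 ^+2 + M 1 0 ^+2 + M 2 0 ^+2) - M 2 0 * (M 0 0 * M 0 1 + M 1 0 * M 1 1 + M 2 0 * M 2 1)); first ring.
  by rewrite hu huv; ring.
Qed.

Lemma qm_cont {T : topologicalType} (x0 x1 x2 x3 : T -> R) z :
  {for z, continuous x0} -> {for z, continuous x1} -> {for z, continuous x2} -> {for z, continuous x3} ->
  {for z, continuous (fun y => qm (x0 y) (x1 y) (x2 y) (x3 y))}.
Proof.
move=> h0 h1 h2 h3; apply: mx_cont => i j.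
case: (ord2 i) => ->; case: (ord2 j) => ->.
- by apply: (cont_ext (g := fun y => (x0 y +i* x1 y)%C)) => [y|]; [rewrite mxE | exact: cplx_cont].
- by apply: (cont_ext (g := fun y => (x2 y +i* x3 y)%C)) => [y|]; [rewrite mxE | exact: cplx_cont].
- apply: (cont_ext (g := fun y => ((- x2 y) +i* x3 y)%C)) => [y|]; first by rewrite mxE.
  by apply: cplx_cont => //; exact: cN.
- apply: (cont_ext (g := fun y => (x0 y +i* (- x1 y))%C)) => [y|]; first by rewrite mxE.
  by apply: cplx_cont => //; exact: cN.
Qed.

Lemma G_cont : continuous G.
Proof.
move=> M; rewrite /G; refine (@cpair _ _ _ _ _ M _ _); apply: qm_cont; try exact: cC; exact: entry_cont.
Qed.

Definition qn (x0 x1 x2 x3 : R) : 'M[C]_2 :=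
  let n := Num.sqrt (x0^+2 + x1^+2 + x2^+2 + x3^+2) in qm (x0 / n) (x1 / n) (x2 / n) (x3 / n).

Lemma qn_unit x0 x1 x2 x3 : x0^+2 + x1^+2 + x2^+2 + x3^+2 = 1 -> qn x0 x1 x2 x3 = qm x0 x1 x2 x3.
Proof. by move=> h; rewrite /qn h sqrtr1 !divr1. Qed.

Lemma qn_cont {T : topologicalType} (x0 x1 x2 x3 : T -> R) z :
  0 < x0 z ^+2 + x1 z ^+2 + x2 z ^+2 + x3 z ^+2 ->
  {for z, continuous x0} -> {for z, continuous x1} -> {for z, continuous x2} -> {for z, continuous x3} ->
  {for z, continuous (fun y => qn (x0 y) (x1 y) (x2 y) (x3 y))}.
Proof.
move=> hz h0 h1 h2 h3.
have nz : Num.sqrt (x0 z ^+2 + x1 z ^+2 + x2 z ^+2 + x3 z ^+2) != 0 by rewrite gt_eqF // sqrtr_gt0.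
have cn : {for z, continuous (fun y => Num.sqrt (x0 y ^+2 + x1 y ^+2 + x2 y ^+2 + x3 y ^+2))}.
  by apply: cS; apply: cD; [apply: cD; [apply: cD|]|]; apply: cX.
by apply: qm_cont; apply: cDiv.
Qed.

Lemma sq4_pos (x0 x1 x2 x3 : R) : ~ (x1 = 0 /\ x2 = 0 /\ x3 = 0) -> 0 < x0^+2 + x1^+2 + x2^+2 + x3^+2.
Proof.
move=> h; rewrite lt_neqAle !addr_ge0 ?sqr_ge0 // andbT; apply/negP => /eqP /esym h0.
apply: h.
have : x1^+2 + x2^+2 + x3^+2 = 0.
  have := sqr_ge0 x0; have := sqr_ge0 x1; have := sqr_ge0 x2; have := sqr_ge0 x3; lra.
by case/sq3_eq0.
Qed.

Lemma qn_facts (x0 x1 x2 x3 y0 y1 y2 y3 lam k1 k2 k3 : R) :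
  lam != 0 -> 0 < k1^+2 + k2^+2 + k3^+2 ->
  x2*y3 - x3*y2 = lam * k1 -> x3*y1 - x1*y3 = lam * k2 -> x1*y2 - x2*y1 = lam * k3 ->
  [/\ 0 < x0^+2 + x1^+2 + x2^+2 + x3^+2, 0 < y0^+2 + y1^+2 + y2^+2 + y3^+2,
      SU2 R (qn x0 x1 x2 x3), SU2 R (qn y0 y1 y2 y3) &
      qn x0 x1 x2 x3 *m qn y0 y1 y2 y3 <> qn y0 y1 y2 y3 *m qn x0 x1 x2 x3].
Proof.
move=> l0 kp e1 e2 e3.
have knz : ~ (k1 = 0 /\ k2 = 0 /\ k3 = 0).
  by case=> h1 [h2 h3]; move: kp; rewrite h1 h2 h3 expr2 !mulr0 !addr0 ltxx.
have k0 : forall a, lam * a = 0 -> a = 0.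
  by move=> a /eqP; rewrite mulf_eq0 (negbTE l0) => /eqP.
have sx : 0 < x0^+2 + x1^+2 + x2^+2 + x3^+2.
  apply: sq4_pos => -[h1 [h2 h3]]; apply: knz.
  split; [|split]; apply: k0; [rewrite -e1 | rewrite -e2 | rewrite -e3]; rewrite ?h1 ?h2 ?h3; ring.
have sy : 0 < y0^+2 + y1^+2 + y2^+2 + y3^+2.
  apply: sq4_pos => -[h1 [h2 h3]]; apply: knz.
  split; [|split]; apply: k0; [rewrite -e1 | rewrite -e2 | rewrite -e3]; rewrite ?h1 ?h2 ?h3; ring.
split => //.
- by apply: qm_SU2; have := unit4 sx.
- by apply: qm_SU2; have := unit4 sy.
set n := Num.sqrt (x0^+2 + x1^+2 + x2^+2 + x3^+2).
set m := Num.sqrt (y0^+2 + y1^+2 + y2^+2 + y3^+2).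
have n0 : n != 0 by rewrite gt_eqF // sqrtr_gt0.
have m0 : m != 0 by rewrite gt_eqF // sqrtr_gt0.
rewrite /qn -/n -/m => /qm_comm [h1 h2 h3]; apply: knz.
have g : forall a b, a / (n * m) = b -> b = 0 -> a = 0.
  move=> a b <- /eqP; rewrite mulf_eq0 invr_eq0 mulf_eq0 (negbTE n0) (negbTE m0) /= orbF; exact/eqP.
split; [|split]; apply: k0.
- apply: (g _ _ _ h1); rewrite -e1; field; exact/andP.
- apply: (g _ _ _ h2); rewrite -e2; field; exact/andP.
- apply: (g _ _ _ h3); rewrite -e3; field; exact/andP.
Qed.

Definition Ht (tp : R * X) : X :=
  (qn (tp.1 * a0 tp.2) (tp.1 * a1 tp.2 + (1 - tp.1) * u1 tp.2)
      (tp.1 * a2 tp.2 + (1 - tp.1) * u2 tp.2) (tp.1 * a3 tp.2 + (1 - tp.1) * u3 tp.2),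
   qn (tp.1 * b0 tp.2) (tp.1 * b1 tp.2 + (1 - tp.1) * v1 tp.2)
      (tp.1 * b2 tp.2 + (1 - tp.1) * v2 tp.2) (tp.1 * b3 tp.2 + (1 - tp.1) * v3 tp.2)).

Lemma conv_pos (t z : R) : 0 <= t -> t <= 1 -> 0 < z -> 0 < t + (1 - t) * z.
Proof.
move=> t0 t1 z0; have [->|tn0] := eqVneq t 0; first by rewrite add0r subr0 mul1r.
have tp : 0 < t by rewrite lt_neqAle eq_sym tn0.
have h : 0 <= (1 - t) * z by rewrite mulr_ge0 // ?subr_ge0 // ltW.
lra.
Qed.

Lemma Ht_facts t p : 0 <= t -> t <= 1 -> D p ->
  let x0 := t * a0 p in let x1 := t * a1 p + (1 - t) * u1 p in
  let x2 := t * a2 p + (1 - t) * u2 p in let x3 := t * a3 p + (1 - t) * u3 p in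
  let y0 := t * b0 p in let y1 := t * b1 p + (1 - t) * v1 p in
  let y2 := t * b2 p + (1 - t) * v2 p in let y3 := t * b3 p + (1 - t) * v3 p in
  [/\ 0 < x0^+2 + x1^+2 + x2^+2 + x3^+2, 0 < y0^+2 + y1^+2 + y2^+2 + y3^+2 &
      D (Ht (t, p))].
Proof.
move=> t0 t1 Dp x0 x1 x2 x3 y0 y1 y2 y3.
have A0 := nA_gt0 Dp; have C0 := nC_gt0 Dp; have AA := DnA Dp.
have [_ _ _ _ CC] := Dfacts Dp.
pose k := t + (1 - t) * (nA p)^-1.
pose m := t + (1 - t) * ((a1 p ^+2 + a2 p ^+2 + a3 p ^+2) / (nC p * nA p)).
have k0 : 0 < k by apply: conv_pos => //; rewrite invr_gt0.
have m0 : 0 < m by apply: conv_pos => //; rewrite divr_gt0 // mulr_gt0.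
have l0 : k * m != 0 by rewrite gt_eqF // mulr_gt0.
have e1 : x2*y3 - x3*y2 = (k * m) * c1 p.
  rewrite /x2 /y3 /x3 /y2 /k /m /v1 /v2 /v3 /w1 /w2 /w3 /u1 /u2 /u3 /c1 /c2 /c3.
  field; rewrite ?gt_eqF //.
have e2 : x3*y1 - x1*y3 = (k * m) * c2 p.
  rewrite /x1 /y3 /x3 /y1 /k /m /v1 /v2 /v3 /w1 /w2 /w3 /u1 /u2 /u3 /c1 /c2 /c3.
  field; rewrite ?gt_eqF //.
have e3 : x1*y2 - x2*y1 = (k * m) * c3 p.
  rewrite /x1 /y2 /x2 /y1 /k /m /v1 /v2 /v3 /w1 /w2 /w3 /u1 /u2 /u3 /c1 /c2 /c3.
  field; rewrite ?gt_eqF //.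
have [sx sy S1 S2 NC] := qn_facts x0 y0 l0 CC e1 e2 e3.
split => //.
split; first by split.
by case=> _ [_].
Qed.
End N.

Section P.
Variable R : realType.
Local Notation C := (R[i]).
Local Notation X := ('M[C]_2 * 'M[C]_2)%type.

Lemma sndl (h : X -> R) (tp : R * X) : {for tp.2, continuous h} ->
  {for tp, continuous (fun q : R * X => h q.2)}.
Proof. move=> ch; exact: (@continuous_comp _ _ _ snd h tp (@csnd _ _ tp) ch). Qed.
Lemma fstl (tp : R * X) : {for tp, continuous (fun q : R * X => q.1)}.
Proof. exact: cfst. Qed.

Lemma Ht_cont t p : 0 <= t -> t <= 1 -> D p -> {for (t, p), continuous (@Ht R)}.
Proof.
move=> t0 t1 Dp.
have [sx sy _] := Ht_facts t0 t1 Dp.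
have hA : nA p != 0 by rewrite gt_eqF // nA_gt0.
have hC : nC p != 0 by rewrite gt_eqF // nC_gt0.
rewrite /Ht; refine (@cpair _ _ _ _ _ (t, p) _ _).
- apply: qn_cont => //.
  + by apply: cM; [exact: fstl | apply: sndl; exact: a0c].
  + by apply: cD; apply: cM; [exact: fstl | apply: sndl; exact: a1c | apply: cB; [exact: cC | exact: fstl] | apply: sndl; exact: u1c].
  + by apply: cD; apply: cM; [exact: fstl | apply: sndl; exact: a2c | apply: cB; [exact: cC | exact: fstl] | apply: sndl; exact: u2c].
  + by apply: cD; apply: cM; [exact: fstl | apply: sndl; exact: a3c | apply: cB; [exact: cC | exact: fstl] | apply: sndl; exact: u3c].
- apply: qn_cont => //.
  + by apply: cM; [exact: fstl | apply: sndl; exact: b0c].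
  + by apply: cD; apply: cM; [exact: fstl | apply: sndl; exact: b1c | apply: cB; [exact: cC | exact: fstl] | apply: sndl; exact: v1c].
  + by apply: cD; apply: cM; [exact: fstl | apply: sndl; exact: b2c | apply: cB; [exact: cC | exact: fstl] | apply: sndl; exact: v2c].
  + by apply: cD; apply: cM; [exact: fstl | apply: sndl; exact: b3c | apply: cB; [exact: cC | exact: fstl] | apply: sndl; exact: v3c].
Qed.

Lemma Ht0 (p : X) : D p -> Ht (0, p) = G (F p).
Proof.
move=> Dp; rewrite /Ht /G /F /frame /= !mxE /= !mul0r !add0r subr0 !mul1r.
by rewrite !qn_unit // expr0n /= add0r ?uu ?vv.
Qed.

Lemma Ht1 (p : X) : D p -> Ht (1, p) = p.
Proof.
move=> Dp; have [e1 e2 n1 n2 _] := Dfacts Dp.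
rewrite /Ht /= !mul1r subrr !mul0r !addr0 !qn_unit // -e1 -e2.
by case: p {Dp e1 e2 n1 n2}.
Qed.

Theorem main : homotopy_equivalent R (@SU2xSU2 R `\` @HomZ2SU2 R) (@SO3 R).
Proof.
exists (@F R), (@G R); split.
- apply: continuous_in_subspaceT => p; rewrite inE => Dp.
  by apply: Fc; rewrite gt_eqF // ?nA_gt0 ?nC_gt0.
- by move=> _ [p Dp <-]; exact: F_SO3.
- exact: continuous_subspaceT (@G_cont R).
- by move=> _ [M SM <-]; exact: G_D.
split.
- exists (@Ht R); split.
  + apply: continuous_in_subspaceT => -[t p]; rewrite inE => -[/= ht Dp].
    move: ht; rewrite in_itv /= => /andP [t0 t1].
    exact: Ht_cont.
  + move=> t p ht Dp; move: ht; rewrite /mkset in_itv /= => /andP [t0 t1].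
    by have [_ _] := Ht_facts t0 t1 Dp.
  + by move=> p Dp; rewrite Ht0.
  + by move=> p Dp; rewrite Ht1.
- exists (fun tp : R * 'M[R]_3 => tp.2); split.
  + by apply: continuous_subspaceT => tp; exact: csnd.
  + by [].
  + by move=> M SM /=; rewrite FG.
  + by [].
Qed.
End P.

Unset Implicit Arguments.
Set Strict Implicit.

Theorem mainTheorem13 (R : realType) :
  homotopy_equivalent R (@SU2xSU2 R `\` @HomZ2SU2 R) (@SO3 R).
Proof. exact: main. Qed.
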